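(* Let $m\ge2$, $a,b\in(0,1/m)$, $f=f_{a,b}$, $X=X_{a,b}$, and $\delta>0$. Let $\mu$ be an ergodic $f$-invariant Borel probability measure which is $\delta$-biased and satisfies $\mu(X)=1$. Then $\chi^u(\mu)\le(1+2\delta)H(a)$, where $H(a)=-\log\sqrt{a(1-ma)}$.
   Context: $F_a(x)=\frac{x-(i-1)a}{a}$ on $[(i-1)a,ia)$, $i\in\{1,\ldots,m\}$, $F_a(x)=\frac{x-ma}{1-ma}$ on $[ma,1]$. $\Omega_i^+=[(i-1)a,ia)\times[0,1]$ for $i\le m$; $\Omega_i^+=[ma,1]\times[\frac{i-m-1}{m},\frac{i-m}{m})$ for $m+1\le i\le2m-1$; $\Omega_{2m}^+=[ma,1]\times[\frac{m-1}{m},1]$. $f_a(x,y)=(F_a(x),\frac{y}{m}+\frac{i-1}{m})$ on $\Omega_i^+$ for $i\le m$, $f_a(x,y)=(F_a(x),my-i+m+1)$ on $\Omega_i^+$ for $i\ge m+1$. $\Omega_i=\Omega_i^+\times[0,1]$, $f_{a,b}(x,y,z)=(f_a(x,y),(1-mb)z)$ on $\Omega_i$ for $i\le m$, $f_{a,b}(x,y,z)=(f_a(x,y),bz+1-mb+b(i-m-1))$ on $\Omega_i$ for $i\ge m+1$. $X_{a,b}=\bigcap_{n\in\mathbb Z}f_{a,b}^{-n}(\bigcup_i\mathrm{int}\,\Omega_i)$; for $p\in X$ let $(\omega_n)_{n\in\mathbb Z}$ be the unique sequence with $f^n(p)\in\mathrm{int}\,\Omega_{\omega_n}$. Define $\psi^u\colon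 X\to\mathbb R$ by $\psi^u(p)=-\log a$ if $\omega_0\le m$ and $\psi^u(p)=-\log(1-ma)$ if $\omega_0\ge m+1$; for $\mu$ with $\mu(X)=1$, the unstable Lyapunov exponent is $\chi^u(\mu)=\int_X\psi^u\,d\mu$. For $\delta\ge0$, an $f$-invariant Borel probability measure $\mu$ is $\delta$-biased if $\mu(X)=1$ and $\big|\mu(\bigcup_{i=1}^m\Omega_i)-\mu(\bigcup_{i=m+1}^{2m}\Omega_i)\big|\le\delta$. *)

(* Defs.v *)
From HB Require Import structures.
From mathcomp Require Import all_boot all_order all_algebra.
From mathcomp Require Import all_classical all_reals all_analysis.
Set Implicit Arguments. Unset Strict Implicit. Unset Printing Implicit Defensive.
Import Order.TTheory GRing.Theory Num.Theory.
Import numFieldNormedType.Exports.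
Local Open Scope classical_set_scope.
Local Open Scope ring_scope.

Section Skew.
Variables (R : realType) (m : nat) (a b : R).

Definition Omega_plus (i : nat) : set (R * R) :=
  if (1 <= i <= m)%N then
    [set q | (i - 1)%:R * a <= q.1 < i%:R * a /\ 0 <= q.2 <= 1]
  else if (m + 1 <= i <= 2 * m - 1)%N then
    [set q | m%:R * a <= q.1 <= 1 /\
             (i - m - 1)%:R / m%:R <= q.2 < (i - m)%:R / m%:R]
  else if i == (2 * m)%N then
    [set q | m%:R * a <= q.1 <= 1 /\ (m - 1)%:R / m%:R <= q.2 <= 1]
  else set0.

(* Omega_i = Omega_i^+ x [0,1]; points are ((x, y), z) *)
Definition Omega (i : nat) : set (R * R * R) :=
  [set p | Omega_plus i p.1 /\ 0 <= p.2 <= 1].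

Definition f_formula (i : nat) (p : R * R * R) : R * R * R :=
  let x := p.1.1 in let y := p.1.2 in let z := p.2 in
  if (i <= m)%N then
    ((x - (i - 1)%:R * a) / a, y / m%:R + (i - 1)%:R / m%:R,
     (1 - m%:R * b) * z)
  else
    ((x - m%:R * a) / (1 - m%:R * a), m%:R * y - i%:R + m%:R + 1,
     b * z + 1 - m%:R * b + b * (i - m - 1)%:R).

(* the (unique) index i in {1..2m} with p in Omega_i, or 0 if none *)
Definition omega_idx (p : R * R * R) : nat :=
  xget 0%N [set i | (1 <= i <= 2 * m)%N /\ Omega i p].

(* f_{a,b}: defined by the formulas on the Omega_i; identity off [0,1]^3 *)
Definition fab (p : R * R * R) : R * R * R :=
  if (1 <= omega_idx p <= 2 * m)%N then f_formula (omega_idx p) p else p.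

Definition Uint : set (R * R * R) :=
  \bigcup_(i in [set i | (1 <= i <= 2 * m)%N]) interior (Omega i).

(* X_{a,b} = \bigcap_{n in Z} f^{-n}(Uint): for n <= 0 a preimage under f^|n|,
   for n > 0 the image under f^n *)
Definition Xab : set (R * R * R) :=
  [set p | forall n : nat, Uint (iter n fab p) /\ ((iter n fab) @` Uint) p].

Definition psi_u (p : R * R * R) : R :=
  if `[< exists i, (1 <= i <= m)%N /\ interior (Omega i) p >] then - ln a
  else - ln (1 - m%:R * a).

Definition chi_u (mu : probability (R * R * R)%type R) : \bar R :=
  (\int[mu]_(p in Xab) (psi_u p)%:E)%E.

Definition f_invariant (mu : probability (R * R * R)%type R) : Prop :=
  forall A : set (R * R * R), measurable A -> mu (fab @^-1` A) = mu A.

Definition f_ergodic (mu : probability (R * R * R)%type R) : Prop :=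
  forall A : set (R * R * R), measurable A -> fab @^-1` A = A ->
    mu A = 0%E \/ mu A = 1%E.

Definition delta_biased (delta : R) (mu : probability (R * R * R)%type R) : Prop :=
  mu Xab = 1%E /\
  (`| mu (\bigcup_(i in [set i | (1 <= i <= m)%N]) Omega i)
     - mu (\bigcup_(i in [set i | (m + 1 <= i <= 2 * m)%N]) Omega i) |
   <= delta%:E)%E.

End Skew.

Definition Hfun (R : realType) (m : nat) (a : R) : R :=
  - ln (Num.sqrt (a * (1 - m%:R * a))).

(* Main.v *)
Require Import Defs.
From HB Require Import structures.
From mathcomp Require Import all_boot all_order all_algebra.
From mathcomp Require Import all_classical all_reals all_analysis.
From mathcomp Require Import zify ring lra.
From mathcomp Require Import measurable_realfun.
Import Order.TTheory GRing.Theory Num.Theory.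
Local Open Scope classical_set_scope.
Local Open Scope ring_scope.

Set Implicit Arguments.
Section Aux.
Variable R : realType.

Lemma mand (P Q : R -> bool) : measurable [set x | P x] -> measurable [set x | Q x] ->
  measurable [set x | P x && Q x].
Proof.
move=> mP mQ.
have -> : [set x | P x && Q x] = [set x | P x] `&` [set x | Q x].
  by apply/seteqP; split => x /=; [move/andP|move=> [-> ->]].
exact: measurableI.
Qed.

Lemma mge (c : R) : measurable [set x : R | c <= x].
Proof.
have -> : [set x : R | c <= x] = `[c, +oo[%classic.
  by apply/seteqP; split => x /=; rewrite in_itv /= ?andbT.
exact: measurable_itv.
Qed.

Lemma mle (c : R) : measurable [set x : R | x <= c].
Proof.
have -> : [set x : R | x <= c] = `]-oo, c]%classic.
  by apply/seteqP; split => x /=; rewrite in_itv /=.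
exact: measurable_itv.
Qed.

Lemma mlt (c : R) : measurable [set x : R | x < c].
Proof.
have -> : [set x : R | x < c] = `]-oo, c[%classic.
  by apply/seteqP; split => x /=; rewrite in_itv /=.
exact: measurable_itv.
Qed.

Lemma mOmega_plus m (a : R) i : measurable (Omega_plus m a i).
Proof.
rewrite /Omega_plus; case: ifP => _.
  exact: (measurableX (@mand _ _ (mge _) (mlt _)) (@mand _ _ (mge _) (mle _))).
case: ifP => _.
  exact: (measurableX (@mand _ _ (mge _) (mle _)) (@mand _ _ (mge _) (mlt _))).
case: ifP => _ //.
exact: (measurableX (@mand _ _ (mge _) (mle _)) (@mand _ _ (mge _) (mle _))).
Qed.

Lemma mOmega m (a : R) i : measurable (Omega m a i).
Proof. exact: (measurableX (mOmega_plus m a i) (@mand _ _ (mge _) (mle _))). Qed.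

End Aux.
Unset Implicit Arguments.

Lemma int_mono (R : realType) d (T : measurableType d) (mu : {measure set T -> \bar R})
  (D1 D2 : set T) (f1 f2 : T -> \bar R) :
  (forall x, D1 x -> (0 <= f1 x)%E) -> (forall x, D2 x -> (0 <= f2 x)%E) ->
  (forall x, ((f1 \_ D1) x <= (f2 \_ D2) x)%E) ->
  (\int[mu]_(x in D1) f1 x <= \int[mu]_(x in D2) f2 x)%E.
Proof.
move=> f10 f20 f12; rewrite !ge0_integralE //; apply: le_ereal_sup.
move=> _ [h /= hf <-]; exists h => //= x; exact: le_trans (hf x) (f12 x).
Qed.

Lemma left_right (R : realType) m (a : R) i j p : (0 <= a) ->
  (1 <= i <= m)%N -> (m + 1 <= j <= 2 * m)%N ->
  Omega m a i p -> Omega m a j p -> False.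
Proof.
move=> a0 hi hj [] + _ [] +.
rewrite /Omega_plus hi.
have -> : (1 <= j <= m)%N = false by apply/negbTE; lia.
move=> [] /andP [_ h1] _.
have h2 : i%:R * a <= m%:R * a by apply: ler_wpM2r => //; rewrite ler_nat; case/andP: hi.
case: ifP => _.
  move=> [] /andP [h3 _] _.
  have := lt_le_trans (le_lt_trans h3 h1) h2; by rewrite ltxx.
case: ifP => _ //.
move=> [] /andP [h3 _] _.
have := lt_le_trans (le_lt_trans h3 h1) h2; by rewrite ltxx.
Qed.

Theorem lemma3p6 (R : realType) (m : nat) (a b delta : R)
  (mu : probability (R * R * R)%type R) :
  (2 <= m)%N ->
  0 < a < 1 / m%:R -> 0 < b < 1 / m%:R ->
  0 < delta ->
  f_invariant m a b mu -> f_ergodic m a b mu ->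
  delta_biased m a b delta mu ->
  mu (Xab m a b) = 1%E ->
  (chi_u m a b mu <= ((1 + 2 * delta) * Hfun m a)%:E)%E.
Proof.
move=> m2 /andP[a0 am] _ delta0 _ _ [_ hbias] hX.
have m0 : 0 < m%:R :> R by rewrite ltr0n; lia.
have ma1 : m%:R * a < 1.
  by move: am; rewrite ltr_pdivlMr // mulrC.
have ma0 : 0 < m%:R * a by rewrite mulr_gt0.
have a1 : a < 1.
  apply: le_lt_trans ma1; by rewrite ler_peMl ?ler1n ?(ltW a0) //; lia.
set A := - ln a; set B := - ln (1 - m%:R * a).
have A0 : 0 < A by rewrite oppr_gt0 ln_lt0 // a0 a1.
have B0 : 0 < B by rewrite oppr_gt0 ln_lt0 // subr_gt0 ma1 /= ltrBlDl ltrDr.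
set Lc := \bigcup_(i in [set i | (1 <= i <= m)%N]) Omega m a i.
set Rc := \bigcup_(i in [set i | (m + 1 <= i <= 2 * m)%N]) Omega m a i.
have mL : measurable Lc by apply: bigcup_measurable => k _; exact: mOmega.
have mR : measurable Rc by apply: bigcup_measurable => k _; exact: mOmega.
have disj : Lc `&` Rc = set0.
  apply/seteqP; split => // p [[i hi Hi] [j hj Hj]].
  exact: (@left_right _ m a i j p (ltW a0) hi hj Hi Hj).
have hsum : (mu Lc + mu Rc <= 1)%E.
  by rewrite -measureU //; apply: probability_le1; exact: measurableU.
have i0 : forall (S : set (R * R * R)) x, 0 <= \1_S x :> R.
  by move=> S x; rewrite indicE ler0n.
have hint : (chi_u m a b mu <= A%:E * mu Lc + B%:E * mu Rc)%E.
  rewrite /chi_u.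
  apply: (@le_trans _ _ (\int[mu]_(x in setT) ((A * \1_Lc x)%:E + (B * \1_Rc x)%:E))%E).
    apply: int_mono.
    - by move=> x _; rewrite lee_fin /psi_u; case: ifP => _; [exact: ltW A0|exact: ltW B0].
    - by move=> x _; rewrite -EFinD lee_fin addr_ge0 // mulr_ge0 // ltW.
    - move=> x; rewrite /patch in_setT; case: ifP => hx; last first.
        by rewrite -EFinD lee_fin addr_ge0 // mulr_ge0 // ltW.
      have [hU _] := (set_mem hx) 0%N.
      rewrite /psi_u; case: ifP => H.
        move/asboolP: H => [i [hi /interior_subset Hi]].
        have xL : Lc x by exists i.
        by rewrite indicE (mem_set xL) mulr1 -EFinD lee_fin lerDl mulr_ge0 // ltW.
      move/asboolPn: H => H.
      case: hU => i /= hi Hi.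
      have hi2 : (m + 1 <= i <= 2 * m)%N.
        case: (leqP i m) => him; last by lia.
        by exfalso; apply: H; exists i; split => //; lia.
      have xR : Rc x by exists i => //; move: Hi => /interior_subset.
      by rewrite [\1_Rc x]indicE (mem_set xR) mulr1 -EFinD lee_fin lerDr mulr_ge0 // ltW.
  rewrite ge0_integralD //; last 4 first.
  - by move=> x _; rewrite lee_fin mulr_ge0 // ltW.
  - apply/measurable_EFinP; apply: measurable_funM => //; exact: measurable_indic.
  - by move=> x _; rewrite lee_fin mulr_ge0 // ltW.
  - apply/measurable_EFinP; apply: measurable_funM => //; exact: measurable_indic.
  rewrite (integralZl_indic _ (fun=> Lc)) //; last by move=> /ltW; rewrite leNgt A0.
  rewrite (integralZl_indic _ (fun=> Rc)) //; last by move=> /ltW; rewrite leNgt B0.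
  by rewrite !integral_indic // !setIT.
have hH : Hfun m a = (A + B) / 2.
  rewrite /Hfun /A /B.
  have p1 : 0 < 1 - m%:R * a by rewrite subr_gt0.
  have pp : 0 < a * (1 - m%:R * a) by rewrite mulr_gt0.
  have sp : 0 < Num.sqrt (a * (1 - m%:R * a)) by rewrite sqrtr_gt0.
  have e1 : ln (a * (1 - m%:R * a)) = ln a + ln (1 - m%:R * a) by rewrite lnM ?posrE.
  have e2 : ln (a * (1 - m%:R * a)) = 2 * ln (Num.sqrt (a * (1 - m%:R * a))).
    rewrite -{1}(sqr_sqrtr (ltW pp)) expr2 lnM ?posrE //; lra.
  lra.
have [x hx] : exists x, mu Lc = x%:E.
  exists (fine (mu Lc)); rewrite fineK // ge0_fin_numE ?measure_ge0 //.
  exact: (le_lt_trans (probability_le1 mu mL)) (ltey _).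
have [y hy] : exists y, mu Rc = y%:E.
  exists (fine (mu Rc)); rewrite fineK // ge0_fin_numE ?measure_ge0 //.
  exact: (le_lt_trans (probability_le1 mu mR)) (ltey _).
have x0 : 0 <= x by rewrite -lee_fin -hx measure_ge0.
have y0 : 0 <= y by rewrite -lee_fin -hy measure_ge0.
rewrite hx hy -EFinD lee_fin in hsum.
rewrite -/Lc -/Rc hx hy -EFinB abse_EFin lee_fin ler_norml in hbias.
apply: (le_trans hint); rewrite hx hy -!EFinM -EFinD lee_fin hH.
case/andP: hbias => hb1 hb2.
have h1 : A * x <= A * ((1 + delta) / 2) by rewrite ler_wpM2l ?(ltW A0) //; lra.
have h2 : B * y <= B * ((1 + delta) / 2) by rewrite ler_wpM2l ?(ltW B0) //; lra.
nra.
Qed.
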